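(* Let $\Sigma$ be an alphabet. Then $\mathrm{RevL}(\mathbb{B},\Sigma)\subseteq\mathrm{RevL}(\mathbb{F}_2,\Sigma)$.
   Context: $\mathbb{F}_2$ is the two-element field and $\mathbb{B}=(\{0,1\},\lor,\land,0,1)$ the Boolean semiring. For a semiring $S$ and finite nonempty alphabet $\Sigma$, a series is a map $r\colon\Sigma^*\to S$ with value $(r,w)$ and support $\mathrm{supp}(r)=\{w\mid(r,w)\neq0\}$. A weighted automaton over $S$ and $\Sigma$ is $\mathcal{A}=(Q,\sigma,\iota,\tau)$ with $Q$ finite, $\sigma\colon Q\times\Sigma\times Q\to S$, $\iota,\tau\colon Q\to S$; a run on $w=a_1\cdots a_t$ is $q_0a_1q_1\cdots a_tq_t$ with all $\sigma(q_{k-1},a_k,q_k)\neq0$, of weight $\iota(q_0)\sigma(q_0,a_1,q_1)\cdots\sigma(q_{t-1},a_t,q_t)\tau(q_t)$, and $(\|\mathcal{A}\|,w)$ is the sum of weights of all runs on $w$. $\mathcal{A}$ is reversible if for all $p,p',q,q'\in Q$, $a\in\Sigma$: $\sigma(p,a,q)\neq0\neq\sigma(p,a,q')$ implies $q=q'$, and $\sigma(p,a,q)\neq0\neq\sigma(p',a,q)$ implies $p=p'$. $\mathrm{RevL}(S,\Sigma)$ is the set of supports of series realised by reversible weighted automata over $S$ and $\Sigma$. Thus $\mathrm{RevL}(\mathbb{B},\Sigma)$ is the set of languages recognised by reversible finite automata in the sense of Pin: nondeterministic finite automata whose transition relation is both deterministic and codeterministic, with arbitrary sets of initial and final states. *)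

(* Defs.v *)
From HB Require Import structures.
From mathcomp Require Import all_boot all_algebra.
Set Implicit Arguments. Unset Strict Implicit. Unset Printing Implicit Defensive.
Import GRing.Theory.
Local Open Scope ring_scope.

(* The Boolean semiring B = ({0,1}, or, and, 0, 1), on a copy of bool
   (MathComp's canonical ring structure on bool is F_2 (xor), so we use
   an alias). *)
Definition boolsr := bool.
Definition bsr_add (a b : boolsr) : boolsr := a || b.
Definition bsr_mul (a b : boolsr) : boolsr := a && b.
HB.instance Definition _ := Choice.on boolsr.
Fact bsr_addA : associative bsr_add. Proof. by case; case; case. Qed.
Fact bsr_addC : commutative bsr_add. Proof. by case; case. Qed.
Fact bsr_add0 : left_id (false : boolsr) bsr_add. Proof. by case. Qed.
HB.instance Definition _ := GRing.isNmodule.Build boolsr bsr_addA bsr_addC bsr_add0.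
Fact bsr_mulA : associative bsr_mul. Proof. by case; case; case. Qed.
Fact bsr_mul1l : left_id (true : boolsr) bsr_mul. Proof. by case. Qed.
Fact bsr_mul1r : right_id (true : boolsr) bsr_mul. Proof. by case. Qed.
Fact bsr_mulDl : left_distributive bsr_mul bsr_add. Proof. by case; case; case. Qed.
Fact bsr_mulDr : right_distributive bsr_mul bsr_add. Proof. by case; case; case. Qed.
Fact bsr_mul0l : left_zero (false : boolsr) bsr_mul. Proof. by case. Qed.
Fact bsr_mul0r : right_zero (false : boolsr) bsr_mul. Proof. by case. Qed.
Fact bsr_oner_neq0 : (true : boolsr) != false. Proof. by []. Qed.
HB.instance Definition _ := GRing.Nmodule_isNzSemiRing.Build boolsr
  bsr_mulA bsr_mul1l bsr_mul1r bsr_mulDl bsr_mulDr bsr_mul0l bsr_mul0r bsr_oner_neq0.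

Record wautomaton (S : pzSemiRingType) (Sigma Q : finType) := WAutomaton {
  wa_sigma : Q -> Sigma -> Q -> S;
  wa_iota  : Q -> S;
  wa_tau   : Q -> S }.

(* Weight of the state sequence q_0 a_1 q_1 ... a_t q_t, where the run is
   given by the start state q0 and the list of states qs = [q_1; ...; q_t]
   (same length as w). Sequences that are not runs have weight 0 automatically. *)
Fixpoint path_weight (S : pzSemiRingType) (Sigma Q : finType)
    (sg : Q -> Sigma -> Q -> S) (tau : Q -> S)
    (p : Q) (w : seq Sigma) (qs : seq Q) : S :=
  match w, qs with
  | [::], [::] => tau p
  | a :: w', q :: qs' => sg p a q * path_weight sg tau q w' qs'
  | _, _ => 0
  end.

Definition behaviour (S : pzSemiRingType) (Sigma Q : finType)
    (A : wautomaton S Sigma Q) (w : seq Sigma) : S :=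
  \sum_(q0 : Q) \sum_(qs : (size w).-tuple Q)
     wa_iota A q0 * path_weight (@wa_sigma _ _ _ A) (@wa_tau _ _ _ A) q0 w qs.

Definition reversible (S : pzSemiRingType) (Sigma Q : finType)
    (A : wautomaton S Sigma Q) : Prop :=
  (forall (p q q' : Q) (a : Sigma),
      wa_sigma A p a q != 0 -> wa_sigma A p a q' != 0 -> q = q') /\
  (forall (p p' q : Q) (a : Sigma),
      wa_sigma A p a q != 0 -> wa_sigma A p' a q != 0 -> p = p').

Definition support_lang (S : pzSemiRingType) (Sigma Q : finType)
    (A : wautomaton S Sigma Q) : seq Sigma -> Prop :=
  fun w => behaviour A w != 0.

Definition RevL (S : pzSemiRingType) (Sigma : finType) (L : seq Sigma -> Prop) : Prop :=
  exists (n : nat) (A : wautomaton S Sigma 'I_n),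
    reversible A /\ forall w, L w <-> support_lang A w.

(* Main.v *)
Require Import Defs.
From mathcomp Require Import all_boot all_algebra.
Set Implicit Arguments. Unset Strict Implicit. Unset Printing Implicit Defensive.
Import GRing.Theory.
Local Open Scope ring_scope.

Fixpoint pw (S : pzSemiRingType) (Sigma Q : finType)
    (sg : Q -> Sigma -> Q -> S) (tau : Q -> S) (p : Q) (w : seq Sigma) : S :=
  match w with
  | [::] => tau p
  | a :: w' => \sum_(q : Q) sg p a q * pw sg tau q w'
  end.

Lemma big_tuple_cons (S : pzSemiRingType) (Q : finType) n (F : n.+1.-tuple Q -> S) :
  \sum_(t : n.+1.-tuple Q) F t = \sum_(q : Q) \sum_(t : n.-tuple Q) F [tuple of q :: t].
Proof.
rewrite pair_big /=.
rewrite (reindex (fun p : Q * n.-tuple Q => [tuple of p.1 :: p.2])) //=.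
exists (fun t : n.+1.-tuple Q => (thead t, [tuple of behead t])).
  by move=> [q t] _ /=; rewrite theadE; congr pair; apply/val_inj.
by move=> t _; rewrite [RHS]tuple_eta.
Qed.

Lemma sum_pw (S : pzSemiRingType) (Sigma Q : finType)
    (sg : Q -> Sigma -> Q -> S) (tau : Q -> S) (w : seq Sigma) (p : Q) :
  \sum_(qs : (size w).-tuple Q) path_weight sg tau p w qs = pw sg tau p w.
Proof.
elim: w p => [|a w IH] p /=.
  rewrite (big_pred1 [tuple]) // => t; apply/esym/eqP/tuple0.
rewrite big_tuple_cons; apply: eq_bigr => q _ /=.
by rewrite -IH mulr_sumr.
Qed.

Lemma behaviourE (S : pzSemiRingType) (Sigma Q : finType) (A : wautomaton S Sigma Q) w :
  behaviour A w = \sum_(q : Q) wa_iota A q * pw (@wa_sigma _ _ _ A) (@wa_tau _ _ _ A) q w.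
Proof. by apply: eq_bigr => q _; rewrite -sum_pw mulr_sumr. Qed.

Lemma RevL_fin (S : pzSemiRingType) (Sigma Q : finType) (A : wautomaton S Sigma Q)
   (L : seq Sigma -> Prop) :
  reversible A -> (forall w, L w <-> support_lang A w) -> RevL S L.
Proof.
move=> [Hd Hc] HL.
pose ev := (@enum_val Q Q).
exists #|Q|, (WAutomaton (fun i a j => wa_sigma A (ev i) a (ev j))
                (fun i => wa_iota A (ev i)) (fun i => wa_tau A (ev i))).
split.
  split=> /= p q q' a H1 H2; apply: enum_val_inj.
    exact: Hd H1 H2.
  exact: Hc H1 H2.
move=> w; apply: iff_trans (HL w) _; rewrite /support_lang !behaviourE /=.
have pwE : forall w i, pw (fun i a j => wa_sigma A (ev i) a (ev j)) (fun i => wa_tau A (ev i)) i w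
   = pw (@wa_sigma _ _ _ A) (@wa_tau _ _ _ A) (ev i) w.
  elim=> [|a w' IH] i //=.
  rewrite (reindex ev) /=; last by exists enum_rank => x _; [exact: enum_valK|exact: enum_rankK].
  by apply: eq_bigr => j _; rewrite IH.
rewrite (reindex ev) /=; last by exists enum_rank => x _; [exact: enum_valK|exact: enum_rankK].
by under eq_bigr => j _ do rewrite -pwE.
Qed.

Lemma nzB (b : boolsr) : (b != 0) = b. Proof. by case: b. Qed.
Lemma mulB (b c : boolsr) : b * c = b && c. Proof. by []. Qed.
Lemma sumB (I : finType) (F : I -> boolsr) : \sum_i F i = [exists i, F i].
Proof.
case: (boolP [exists i, F i]) => [/existsP [i Fi]|/existsP none].
  by rewrite (bigD1 i) //= Fi.
by rewrite big1 // => i _; apply/negbTE/negP => Fi; apply: none; exists i.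
Qed.

Definition bF (b : bool) : 'F_2 := (b : nat)%:R.
Lemma bF_nz b : (bF b != 0) = b. Proof. by case: b. Qed.
Lemma bF_eq0 b : (bF b == 0) = ~~ b. Proof. by case: b. Qed.
Lemma bFM b c : bF b * bF c = bF (b && c).
Proof. by case: b; case: c; rewrite /bF /= ?mulr1 ?mulr0. Qed.
Lemma sum_bF (I : finType) (P : pred I) : \sum_i bF (P i) = (#|P|)%:R.
Proof.
rewrite -sum1_card natr_sum [RHS]big_mkcond /=; apply: eq_bigr => i _.
by rewrite /bF unfold_in; case: (P i).
Qed.

Section Constr.
Variables (Sigma Q : finType) (A : wautomaton boolsr Sigma Q).
Hypothesis HA : reversible A.
Let sg := wa_sigma A.
Let tau := wa_tau A.
Let iota := wa_iota A.

Definition sg2 (X : {set Q}) (a : Sigma) (Y : {set Q}) : 'F_2 :=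
  bF ([forall x in X, exists y in Y, sg x a y] && [forall y in Y, exists x in X, sg x a y]).
Definition tau2 (X : {set Q}) : 'F_2 := bF (X \subset [set q | tau q]).
Definition iota2 (X : {set Q}) : 'F_2 := bF ((X != set0) && (X \subset [set q | iota q])).
Definition A2 := WAutomaton sg2 iota2 tau2.

Lemma det (p q q' : Q) a : sg p a q -> sg p a q' -> q = q'.
Proof. by case: HA => Hd _ H1 H2; apply: (Hd p q q' a); rewrite nzB. Qed.
Lemma codet (p p' q : Q) a : sg p a q -> sg p' a q -> p = p'.
Proof. by case: HA => _ Hc H1 H2; apply: (Hc p p' q a); rewrite nzB. Qed.

Lemma A2_rev : reversible A2.
Proof.
split=> /= p q q' a; rewrite /sg2 !bF_nz => /andP[/forallP H1 /forallP H2] /andP[/forallP H3 /forallP H4].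
- apply/eqP; rewrite eqEsubset; apply/andP; split; apply/subsetP => y yY.
  + have /existsP[x /andP[xp sxy]] := implyP (H2 y) yY.
    have /existsP[y' /andP[y'q sxy']] := implyP (H3 x) xp.
    by rewrite (det sxy sxy').
  + have /existsP[x /andP[xp sxy]] := implyP (H4 y) yY.
    have /existsP[y' /andP[y'q sxy']] := implyP (H1 x) xp.
    by rewrite (det sxy sxy').
- apply/eqP; rewrite eqEsubset; apply/andP; split; apply/subsetP => x xX.
  + have /existsP[y /andP[yq sxy]] := implyP (H1 x) xX.
    have /existsP[x' /andP[x'p sxy']] := implyP (H4 y) yq.
    by rewrite (codet sxy sxy').
  + have /existsP[y /andP[yq sxy]] := implyP (H3 x) xX.
    have /existsP[x' /andP[x'p sxy']] := implyP (H2 y) yq.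
    by rewrite (codet sxy sxy').
Qed.

Definition G (w : seq Sigma) := [set q | (pw sg tau q w : bool)].

Lemma pwB q a w : (pw sg tau q (a :: w) : bool) = [exists q', sg q a q' && pw sg tau q' w].
Proof. by rewrite /= sumB. Qed.

Lemma pw2 w (X : {set Q}) : pw sg2 tau2 X w = bF (X \subset G w).
Proof.
elim: w X => [|a w IH] X //=.
under eq_bigr => Y _ do rewrite IH bFM.
case: (boolP [forall x in X, exists y, sg x a y]) => [/forallP tot|/forallP ntot].
  pose Y0 := [set y | [exists x in X, sg x a y]].
  have sY0 : [forall x in X, exists y in Y0, sg x a y] && [forall y in Y0, exists x in X, sg x a y].
    apply/andP; split; apply/forallP => x; apply/implyP => xX.
      have /existsP[y sxy] := implyP (tot x) xX.
      by apply/existsP; exists y; rewrite sxy andbT inE; apply/existsP; exists x; rewrite xX.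
    by rewrite inE in xX.
  rewrite (bigD1 Y0) //= big1 ?addr0.
    congr bF; rewrite sY0 /=; apply/subsetP/subsetP => H x.
      move=> xX; rewrite inE pwB.
      have /existsP[y sxy] := implyP (tot x) xX.
      apply/existsP; exists y; rewrite sxy /=.
      have := H y; rewrite !inE; apply; apply/existsP; exists x; by rewrite xX.
    rewrite inE => /existsP[x' /andP[xX sxy]].
    have := H x' xX; rewrite !inE pwB => /existsP[y' /andP[sxy' py']].
    by rewrite (det sxy sxy').
  move=> Y /negbTE YY0; apply/eqP; rewrite bF_eq0; apply/negP => /andP[/andP[/forallP H1 /forallP H2] _].
  move/negP: YY0; apply; apply/eqP/setP => y; rewrite inE; apply/idP/idP => [yY|/existsP[x /andP[xX sxy]]].
    exact: (implyP (H2 y) yY).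
  have /existsP[y' /andP[y'Y sxy']] := implyP (H1 x) xX.
  by rewrite (det sxy sxy').
have [x nx] : exists x, ~~ ((x \in X) ==> [exists y, sg x a y]).
  by apply/existsP; rewrite -negb_forall; apply/negP => /forallP.
move: nx; rewrite negb_imply => /andP[xX /existsPn nx].
rewrite big1.
  apply/esym/eqP; rewrite bF_eq0; apply/negP => /subsetP /(_ x xX); rewrite inE pwB.
  by case/existsP => y /andP[sxy _]; move: (nx y); rewrite sxy.
move=> Y _; apply/eqP; rewrite bF_eq0; apply/negP => /andP[/andP[/forallP H1 _] _].
have /existsP[y /andP[_ sxy]] := implyP (H1 x) xX.
by move: (nx y); rewrite sxy.
Qed.

End Constr.

Local Close Scope ring_scope.
Theorem lemma1 (Sigma : finType) (Sigma_nonempty : 0 < #|Sigma|)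
    (L : seq Sigma -> Prop) :
  RevL boolsr L -> RevL 'F_2 L.
Proof.
move=> [n [A [HA HL]]].
apply: (RevL_fin (A2_rev HA)) => w.
apply: iff_trans (HL w) _; rewrite /support_lang !behaviourE /=.
under eq_bigr => q _ do rewrite mulB.
rewrite sumB nzB.
under [X in _ <-> is_true (X != 0)%R]eq_bigr => X _ do rewrite (pw2 HA) /iota2 bFM.
rewrite sum_bF.
set I := [set q | wa_iota A q].
set k := #|I :&: G A w|.
have -> : #|[pred X : {set 'I_n} | (X != set0) && (X \subset I) && (X \subset G A w)]| = 2 ^ k - 1.
  rewrite -card_powerset (cardsD1 set0) inE sub0set add1n subn1 /=.
  by apply: eq_card => X; rewrite !inE subsetI andbA.
rewrite -(Fp_nat_mod (p:=2)) // modn2.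
have -> : [exists q, wa_iota A q && pw (wa_sigma A) (wa_tau A) q w] = (0 < k).
  rewrite card_gt0; apply/existsP/set0Pn => [[q Hq]|[q Hq]]; exists q; by rewrite !inE in Hq *.
case: k => [|k] //=.
rewrite oddB ?expn_gt0 // oddX /=.
by split.
Qed.
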